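(* Let $k,\ell,n,p$ be positive integers, and let $C\in\mathbb{R}^{k\times \ell}$, $A\in\mathbb{R}^{n\times p}$, $M\in\mathbb{R}^{k\times k}$ symmetric positive semidefinite, and $B\in\mathbb{R}^{k\times n}$ injective (i.e. $\mathrm{null}(B)=\{0\}$). Define the block matrix \[ \mathcal{M}:=\begin{bmatrix} -C^T & 0\\ 0 & -A^T\\ M & -B\\ B^T & 0\end{bmatrix}\in\mathbb{R}^{(\ell+p+k+n)\times(k+n)}. \] Then $\mathcal{M}$ is injective if and only if \[ \mathrm{null}(M)\cap\mathrm{null}(B^T)\cap\mathrm{null}(C^T)=\{0\}. \]
   Context: This matrix arises from the KKT system of the problem of minimizing over $y\in\mathbb{R}^n$ the piecewise linear quadratic function $\rho(y)=\sup_{u\in\mathbb{R}^k:\,C^Tu\le c}\{\langle u,b+By\rangle-\tfrac12\langle u,Mu\rangle\}$ subject to $A^Ty\le a$, where $b\in\mathbb{R}^k$, $c\in\mathbb{R}^\ell$, $a\in\mathbb{R}^p$. $\mathrm{null}(\cdot)$ denotes the null space. *)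

(* Defs.v *)
From mathcomp Require Import all_boot all_order all_algebra.
From mathcomp Require Import Rstruct.
From Stdlib Require Import Rdefinitions.
Set Implicit Arguments. Unset Strict Implicit. Unset Printing Implicit Defensive.
Import GRing.Theory Num.Theory.
Local Open Scope ring_scope.

Definition mx_injective (r c : nat) (A : 'M[R]_(r, c)) : Prop :=
  forall x : 'cV[R]_c, A *m x = 0 -> x = 0.

Definition psd (m : nat) (M : 'M[R]_m) : Prop :=
  M^T = M /\ forall x : 'cV[R]_m, 0 <= (x^T *m M *m x) 0 0.

Definition kkt_mx (k l n p : nat) (C : 'M[R]_(k, l)) (A : 'M[R]_(n, p))
  (M : 'M[R]_k) (B : 'M[R]_(k, n)) : 'M[R]_(l + p + k + n, k + n) :=
  col_mx (col_mx (col_mx (row_mx (- C^T) 0) (row_mx 0 (- A^T)))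
                 (row_mx M (- B)))
         (row_mx B^T 0).

(* Main.v *)
Require Import Defs.
From mathcomp Require Import all_boot all_order all_algebra.
From mathcomp Require Import Rstruct.
From Stdlib Require Import Rdefinitions.
From mathcomp Require Import ring lra.
Import GRing.Theory Num.Theory.
Local Open Scope ring_scope.


Lemma sq0 (m : nat) (v : 'cV[R]_m) : (v^T *m v) 0 0 = 0 -> v = 0.
Proof.
rewrite mxE => H; apply/matrixP => i j; rewrite (ord1 j) mxE.
have P := @psumr_eq0P _ _ (fun _ => true)
   (fun i0 => v^T 0 i0 * v i0 0).
have Hn : forall i0, true -> 0 <= v^T 0 i0 * v i0 0.
  by move=> i0 _; rewrite mxE -expr2 sqr_ge0.
have := P Hn H i isT; rewrite mxE => /eqP; rewrite mulf_eq0 orbb => /eqP //.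
Qed.

Lemma psd_null (m : nat) (M : 'M[R]_m) (u : 'cV[R]_m) :
  psd M -> (u^T *m M *m u) 0 0 = 0 -> M *m u = 0.
Proof.
move=> [Msym Mpos] Hq.
set w := M *m u.
set a := (w^T *m M *m u) 0 0.
set c := (w^T *m M *m w) 0 0.
have Hsym : (u^T *m M *m w) 0 0 = a.
  have -> : (u^T *m M *m w) 0 0 = ((u^T *m M *m w)^T) 0 0 by rewrite [in RHS]mxE.
  by rewrite /a !trmx_mul trmxK Msym mulmxA.
have Hexp : forall t : R, (((u + t *: w)^T *m M *m (u + t *: w)) 0 0)
    = (u^T *m M *m u) 0 0 + t * (u^T *m M *m w) 0 0 + t * a + t * t * c.
  move=> t; rewrite /a /c [(u + _)^T]linearD /= [(t *: w)^T]linearZ /= !mulmxDl !mulmxDr.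
  rewrite -!scalemxAl -!scalemxAr !scalerA.
  have EZ : forall (b : R) (X : 'M[R]_1), (b *: X) 0 0 = b * X 0 0 by move=> *; rewrite mxE.
  have ED : forall (X Y : 'M[R]_1), (X + Y) 0 0 = X 0 0 + Y 0 0 by move=> *; rewrite mxE.
  rewrite !ED !EZ.
  ring.
have Hc : 0 <= c by apply: Mpos.
have Hw : a = (w^T *m w) 0 0.
  by rewrite /a -mulmxA.
have Ha : 0 <= a.
  rewrite Hw mxE; apply: sumr_ge0 => i _; rewrite mxE -expr2 sqr_ge0 //.
have Hs := Mpos (u + (- (a / (c + 1))) *: w).
rewrite Hexp Hq Hsym in Hs.
set s := a / (c + 1) in Hs.
have Has : a = s * (c + 1) by rewrite /s mulfVK //; apply/lt0r_neq0; lra.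
have : s = 0 by nra.
move=> s0; rewrite s0 mul0r in Has.
apply: sq0; by rewrite -Hw.
Qed.
Theorem theorem5p1 (k l n p : nat) (C : 'M[R]_(k, l)) (A : 'M[R]_(n, p))
  (M : 'M[R]_k) (B : 'M[R]_(k, n)) :
  (0 < k)%coq_nat -> (0 < l)%coq_nat -> (0 < n)%coq_nat -> (0 < p)%coq_nat ->
  psd M -> mx_injective B ->
  (mx_injective (kkt_mx C A M B) <->
   (forall u : 'cV[R]_k, M *m u = 0 -> B^T *m u = 0 -> C^T *m u = 0 -> u = 0)).

Proof.
move=> _ _ _ _ HM HB.
have Hk : forall (u : 'cV[R]_k) (v : 'cV[R]_n), kkt_mx C A M B *m col_mx u v =
   col_mx (col_mx (col_mx (- (C^T *m u)) (- (A^T *m v))) (M *m u - B *m v)) (B^T *m u).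
  move=> u v; rewrite /kkt_mx !mul_col_mx !mul_row_col !mul0mx ?mulmx0.
  by rewrite !mulNmx add0r !addr0.
split.
- move=> Hinj u Mu Bu Cu.
  have H0 : kkt_mx C A M B *m col_mx u (0 : 'cV_n) = 0.
    by rewrite Hk Mu Bu Cu !mulmx0 !oppr0 ?subr0 ?oppr0 ?addr0 !col_mx0.
  have /eqP := Hinj _ H0.
  by rewrite col_mx_eq0 => /andP [/eqP].
- move=> H x.
  rewrite -(vsubmxK x); set u := usubmx x; set v := dsubmx x.
  rewrite Hk => /eqP; rewrite !col_mx_eq0 !oppr_eq0 subr_eq0.
  case/andP=> [/andP [/andP [/eqP Cu /eqP Av] /eqP MB] /eqP Bu].
  have Hq : (u^T *m M *m u) 0 0 = 0.
    rewrite -mulmxA MB mulmxA -(trmxK (u^T *m B)) trmx_mul trmxK Bu.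
    by rewrite trmx0 mul0mx mxE.
  have Mu0 := @psd_null _ _ _ HM Hq.
  have u0 : u = 0 by apply: H.
  have v0 : v = 0 by apply: HB; rewrite -MB Mu0.
  by rewrite u0 v0 col_mx0.
Qed.
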